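(* Let $M,N,d$ be positive integers. For $i=1,\dots,M$, $j=1,\dots,N$ let $x_{ij}\in\mathbb{R}^d$, $y_{ij}\in\{+1,-1\}$, with the points drawn from a continuous (absolutely continuous) distribution and the dataset satisfying: each $C_i=\{w:\ y_{ij}x_{ij}^Tw\ge1,\ j=1,\dots,N\}$ is nonempty and $\bar C=\bigcap_{i=1}^MC_i\neq\emptyset$. For $\lambda>0$ let $w_0^K=w_0^K(\lambda)$ be the Local-GD iterates: $w_0^0=0$, $w_i^{k+1}=\arg\min_{w}\sum_{j=1}^N\exp(-y_{ij}x_{ij}^Tw)+\frac\lambda2\|w-w_0^k\|^2$, $w_0^{k+1}=\frac1M\sum_{i=1}^Mw_i^{k+1}$. Then, for almost all such datasets, there exists a point $\bar w\in\bar C$ such that $$\lim_{K\to\infty}\lim_{\lambda\to0}\frac{w_0^K(\lambda)}{\|w_0^K(\lambda)\|}=\frac{\bar w}{\|\bar w\|},$$ i.e. the Local-GD global model converges in direction to a point of $\bar C$; while the centralized model, obtained by gradient descent from $0$ with a sufficiently small constant step size on $\sum_{i=1}^M\sum_{j=1}^N\exp(-y_{ij}x_{ij}^Tw)$, converges in direction to the minimum-norm point $\arg\min_{w\in\bar C}\|w\|$ of the same set.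
   Context: Local-GD for binary linear classification over $M$ compute nodes with exponential loss and a vanishing proximal regularization parameter $\lambda\to0$; each local problem is solved exactly (unique minimizer of the strongly convex local objective) in each round, which corresponds to ''a large number of local steps''. $\bar C$ is the global feasible set of the hard-margin SVM on all data. *)

(* Defs.v *)
From HB Require Import structures.
From mathcomp Require Import all_boot all_order all_algebra.
From mathcomp Require Import all_classical all_reals all_analysis.
Set Implicit Arguments. Unset Strict Implicit. Unset Printing Implicit Defensive.
Import Order.TTheory GRing.Theory Num.Theory.
Import numFieldNormedType.Exports.
Local Open Scope classical_set_scope.
Local Open Scope ring_scope.

Section Defs.
Variable R : realType.

Definition dot (d : nat) (u v : 'rV[R]_d) : R := \sum_(k < d) u 0 k * v 0 k.
Definition enorm (d : nat) (v : 'rV[R]_d) : R := Num.sqrt (dot v v).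
Definition dirn (d : nat) (v : 'rV[R]_d) : 'rV[R]_d := (enorm v)^-1 *: v.

Variables (M N d : nat).
Variables (x : 'I_M -> 'I_N -> 'rV[R]_d) (y : 'I_M -> 'I_N -> R).

Definition Cset (i : 'I_M) : set 'rV[R]_d :=
  [set w | forall j : 'I_N, 1 <= y i j * dot (x i j) w].
Definition Cbar : set 'rV[R]_d := [set w | forall i : 'I_M, Cset i w].

Definition local_obj (i : 'I_M) (w0 : 'rV[R]_d) (lam : R) (w : 'rV[R]_d) : R :=
  \sum_(j < N) expR (- (y i j * dot (x i j) w)) + lam / 2 * enorm (w - w0) ^+ 2.

(* the (unique, for lam > 0) minimizer of the local objective *)
Definition local_step (i : 'I_M) (w0 : 'rV[R]_d) (lam : R) : 'rV[R]_d :=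
  xget 0 [set w | forall v, local_obj i w0 lam w <= local_obj i w0 lam v].

Definition localGD (lam : R) (K : nat) : 'rV[R]_d :=
  iter K (fun w0 => (M%:R)^-1 *: \sum_(i < M) local_step i w0 lam) 0.

(* gradient of the centralized loss L(w) = sum_i sum_j exp(-y_ij x_ij^T w) *)
Definition central_grad (w : 'rV[R]_d) : 'rV[R]_d :=
  \sum_(i < M) \sum_(j < N) (- (expR (- (y i j * dot (x i j) w)) * y i j)) *: x i j.

Definition centralGD (eta : R) (t : nat) : 'rV[R]_d :=
  iter t (fun w => w - eta *: central_grad w) 0.

End Defs.

Definition lebesgue_null (R : realType) (I : finType) (E : set (I -> R)) : Prop :=
  forall eps : R, 0 < eps ->
    exists a b : nat -> I -> R,
      (forall k i, a k i <= b k i) /\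
      E `<=` \bigcup_k [set z | forall i, a k i <= z i <= b k i] /\
      (forall n, \sum_(k < n) \prod_(i : I) (b k i - a k i) <= eps).

Definition data_of (R : realType) (M N d : nat) (z : ('I_M * 'I_N * 'I_d) -> R)
  : 'I_M -> 'I_N -> 'rV[R]_d := fun i j => \row_k z (i, j, k).

(* Main.v *)
Require Import Defs.
From HB Require Import structures.
Set Implicit Arguments. Unset Strict Implicit. Unset Printing Implicit Defensive.
From mathcomp Require Import all_boot all_order all_algebra.
From mathcomp Require Import all_classical all_reals all_analysis.
From mathcomp Require Import ring lra.
Import Order.TTheory GRing.Theory Num.Theory.
Import numFieldNormedType.Exports.
Local Open Scope classical_set_scope.
Local Open Scope ring_scope.
Section Vec.
Variables (R : realType) (d : nat).
Implicit Types u v w : 'rV[R]_d.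

Definition nsq v := dot v v.

Lemma dotC u v : dot u v = dot v u.
Proof. by apply: eq_bigr => k _; rewrite mulrC. Qed.
Lemma dotDl u v w : dot (u + v) w = dot u w + dot v w.
Proof. by rewrite /dot -big_split; apply: eq_bigr => k _; rewrite mxE mulrDl. Qed.
Lemma dotDr u v w : dot w (u + v) = dot w u + dot w v.
Proof. by rewrite dotC dotDl !(dotC w). Qed.
Lemma dotZl a u v : dot (a *: u) v = a * dot u v.
Proof. by rewrite /dot mulr_sumr; apply: eq_bigr => k _; rewrite mxE mulrA. Qed.
Lemma dotZr a u v : dot u (a *: v) = a * dot u v.
Proof. by rewrite dotC dotZl dotC. Qed.
Lemma dotNl u v : dot (- u) v = - dot u v.
Proof. by rewrite -scaleN1r dotZl mulN1r. Qed.
Lemma dotNr u v : dot u (- v) = - dot u v.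
Proof. by rewrite dotC dotNl dotC. Qed.
Lemma dotBl u v w : dot (u - v) w = dot u w - dot v w.
Proof. by rewrite dotDl dotNl. Qed.
Lemma dotBr u v w : dot w (u - v) = dot w u - dot w v.
Proof. by rewrite dotDr dotNr. Qed.
Lemma dot0l v : dot 0 v = 0.
Proof. by rewrite /dot big1 // => k _; rewrite mxE mul0r. Qed.
Lemma dot0r v : dot v 0 = 0.
Proof. by rewrite dotC dot0l. Qed.
Lemma dot_suml (I : finType) (f : I -> 'rV[R]_d) v :
  dot (\sum_i f i) v = \sum_i dot (f i) v.
Proof.
rewrite /dot exchange_big /=; apply: eq_bigr => k _.
by rewrite summxE mulr_suml.
Qed.
Lemma dot_sumr (I : finType) (f : I -> 'rV[R]_d) v :
  dot v (\sum_i f i) = \sum_i dot v (f i).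
Proof. by rewrite dotC dot_suml; apply: eq_bigr => i _; rewrite dotC. Qed.

Lemma nsq_ge0 v : 0 <= nsq v.
Proof. by apply: sumr_ge0 => k _; rewrite -expr2 sqr_ge0. Qed.
Lemma nsqD u v : nsq (u + v) = nsq u + 2 * dot u v + nsq v.
Proof. rewrite /nsq dotDl !dotDr (dotC v u); ring. Qed.
Lemma nsqB u v : nsq (u - v) = nsq u - 2 * dot u v + nsq v.
Proof. rewrite /nsq dotBl !dotBr (dotC v u); ring. Qed.
Lemma nsqZ a v : nsq (a *: v) = a ^+ 2 * nsq v.
Proof. rewrite /nsq dotZl dotZr; ring. Qed.
Lemma nsqN v : nsq (- v) = nsq v.
Proof. by rewrite /nsq dotNl dotNr opprK. Qed.
Lemma nsq0 : nsq 0 = 0.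
Proof. by rewrite /nsq dot0l. Qed.
Lemma nsqBC u v : nsq (u - v) = nsq (v - u).
Proof. by rewrite -nsqN opprB. Qed.

Lemma coord_le_nsq v k : v 0 k ^+ 2 <= nsq v.
Proof.
rewrite /nsq /dot (bigD1 k) //= -expr2 lerDl.
by apply: sumr_ge0 => i _; rewrite -expr2 sqr_ge0.
Qed.

Lemma nsq_eq0 v : nsq v = 0 -> forall k, v 0 k = 0.
Proof.
move=> h k; have := coord_le_nsq v k; rewrite h => hk.
have : v 0 k ^+ 2 = 0 by apply/eqP; rewrite eq_le hk sqr_ge0.
by move/eqP; rewrite sqrf_eq0 => /eqP.
Qed.

Lemma dot_nsq0 u v : nsq v = 0 -> dot u v = 0.
Proof. by move=> h; rewrite /dot big1 // => k _; rewrite (@nsq_eq0 v h) mulr0. Qed.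

Lemma CS u v : dot u v ^+ 2 <= nsq u * nsq v.
Proof.
have [h0|hpos] := eqVneq (nsq v) 0.
  by rewrite dot_nsq0 // h0 mulr0 expr0n.
have hv : 0 < nsq v by rewrite lt_def hpos nsq_ge0.
set D := dot u v.
have := nsq_ge0 (u - (D / nsq v) *: v).
rewrite nsqB dotZr nsqZ -/D => h.
have e : nsq u - 2 * (D / nsq v * D) + (D / nsq v) ^+ 2 * nsq v
   = nsq u - D ^+ 2 / nsq v by field; rewrite gt_eqF.
rewrite e subr_ge0 ler_pdivrMr // in h.
Qed.

Lemma nsq_sum (I : finType) (f : I -> 'rV[R]_d) :
  nsq (\sum_i f i) = \sum_i \sum_j dot (f i) (f j).
Proof. by rewrite /nsq dot_suml; apply: eq_bigr => i _; rewrite dot_sumr. Qed.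

Definition en v := Num.sqrt (nsq v).
Lemma enE v : enorm v = en v. Proof. by []. Qed.
Lemma en_ge0 v : 0 <= en v. Proof. exact: sqrtr_ge0. Qed.
Lemma en_sq v : en v ^+ 2 = nsq v. Proof. by rewrite sqr_sqrtr // nsq_ge0. Qed.
Lemma en_mul v : en v * en v = nsq v. Proof. by rewrite -expr2 en_sq. Qed.
Lemma en_le_sq v e : 0 <= e -> nsq v <= e ^+ 2 -> en v <= e.
Proof.
move=> he h; have := en_ge0 v; rewrite -(en_sq v) in h.
by move=> h0; rewrite -(ler_pXn2r (n:=2)) // ?nnegrE.
Qed.
Lemma en_lt_sq v e : 0 <= e -> nsq v < e ^+ 2 -> en v < e.
Proof.
move=> he h; have := en_ge0 v; rewrite -(en_sq v) in h.
by move=> h0; rewrite -(ltr_pXn2r (n:=2)) // ?nnegrE.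
Qed.
Lemma sq_le_en v e : 0 <= e -> en v <= e -> nsq v <= e ^+ 2.
Proof. by move=> he h; rewrite -en_sq; rewrite ler_pXn2r // ?nnegrE // en_ge0. Qed.
Lemma sq_lt_en v e : 0 <= e -> en v < e -> nsq v < e ^+ 2.
Proof. by move=> he h; rewrite -en_sq; rewrite ltr_pXn2r // ?nnegrE // en_ge0. Qed.

Lemma CSn u v : dot u v <= en u * en v.
Proof.
have := CS u v; rewrite -!en_sq -exprMn => h.
have h1 : 0 <= en u * en v by rewrite mulr_ge0 ?en_ge0.
move: h1 h; set a := en u * en v; set D := dot u v => h1 h.
rewrite leNgt; apply/negP => hD.
have : a ^+ 2 < D ^+ 2 by rewrite ltr_pXn2r // ?nnegrE // (le_trans h1 (ltW hD)).
by rewrite ltNge h.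
Qed.
Lemma CSabs u v : `|dot u v| <= en u * en v.
Proof.
rewrite ler_norml CSn andbT lerNl -dotNl.
have : en (-u) = en u by rewrite /en nsqN.
by move=> <-; apply: CSn.
Qed.

Lemma enD u v : en (u + v) <= en u + en v.
Proof.
apply: en_le_sq; first by rewrite addr_ge0 ?en_ge0.
rewrite nsqD -!en_sq; have := CSn u v; nra.
Qed.
Lemma enN v : en (- v) = en v. Proof. by rewrite /en nsqN. Qed.
Lemma enBC u v : en (u - v) = en (v - u). Proof. by rewrite /en nsqBC. Qed.
Lemma enB u v : en (u - v) <= en u + en v.
Proof. by rewrite -(enN v) enD. Qed.
Lemma en_tri u v w : en (u - w) <= en (u - v) + en (v - w).
Proof. have -> : u - w = (u - v) + (v - w) by rewrite addrA subrK.
exact: enD. Qed.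
Lemma enZ a v : en (a *: v) = `|a| * en v.
Proof. by rewrite /en nsqZ sqrtrM ?sqr_ge0 // sqrtr_sqr. Qed.
Lemma en0 : en 0 = 0. Proof. by rewrite /en nsq0 sqrtr0. Qed.
Lemma en_eq0 v : en v = 0 -> v = 0.
Proof.
move=> h; have h2 : nsq v = 0 by rewrite -en_sq h expr0n.
by apply/rowP => k; rewrite (@nsq_eq0 v h2) mxE.
Qed.
Lemma en_rev u v : en u - en v <= en (u - v).
Proof. by rewrite lerBlDr -{1}(subrK v u) enD. Qed.

Lemma coord_le_en v k : `|v 0 k| <= en v.
Proof.
apply: (@le_trans _ _ (Num.sqrt (v 0 k ^+ 2))); first by rewrite sqrtr_sqr.
by rewrite ler_sqrt ?nsq_ge0 // coord_le_nsq.
Qed.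

Lemma nsq_coord_le v e : (forall k, `|v 0 k| <= e) -> nsq v <= d%:R * e ^+ 2.
Proof.
move=> h; rewrite /nsq /dot.
apply: (@le_trans _ _ (\sum_(k < d) e ^+ 2)); last by rewrite sumr_const card_ord mulr_natl.
apply: ler_sum => k _; rewrite -expr2 -real_normK ?num_real //.
by rewrite ler_pXn2r ?nnegrE // (le_trans _ (h k)).
Qed.

Lemma normr_le_en v : `|v| <= en v.
Proof.
have -> : `|v| = mx_norm v by [].
have [h|h] := eqVneq (mx_norm v) 0.
  by rewrite h en_ge0.
have [[i j] ->] := mx_norm_neq0 h; rewrite /= (ord1 i); exact: coord_le_en.
Qed.

End Vec.
Section Clus.
Variables (R : realType) (d : nat).

Lemma coord_le_normr (v : 'rV[R]_d) k : `|v 0 k| <= `|v|.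
Proof.
have -> : `|v| = mx_norm v by [].
rewrite mx_normrE.
exact: (le_bigmax (0:R) (fun ij : 'I_1 * 'I_d => `|v ij.1 ij.2|) (ord0, k)).
Qed.

Lemma ball_coord (v w : 'rV[R]_d) e : ball v e w -> forall k, `|v 0 k - w 0 k| < e.
Proof.
rewrite mx_norm_ball /ball_ => h k.
apply: le_lt_trans h; have := coord_le_normr (v - w) k; rewrite !mxE; exact.
Qed.

Lemma cluster_seq (u : nat -> 'rV[R]_d) B : (forall n, en (u n) <= B) ->
  exists v, forall e, 0 < e -> forall n0, exists n, (n0 <= n)%N /\ en (u n - v) < e.
Proof.
move=> hB.
have cA : compact [set v : 'rV[R]_d | forall i, `[-B, B]%classic (v ord0 i)].
  by apply: (@rV_compact _ _ (fun i => `[-B, B]%classic)) => i; apply: segment_compact.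
have hF : (u @ \oo) [set v : 'rV[R]_d | forall i, `[-B, B]%classic (v ord0 i)].
  exists 0%N => // n _ i /=; rewrite in_itv /= -ler_norml.
  exact: le_trans (coord_le_en _ _) (hB n).
have [v [_ cv]] := cA (u @ \oo) _ hF.
exists v => e he n0.
set D : R := d%:R.
have hD : 0 <= D by rewrite /D ler0n.
set e' := e / (D + 1).
have he' : 0 < e' by rewrite /e' divr_gt0 // ltr_wpDl.
have hee : e = e' * (D + 1) by rewrite /e' divfK // gt_eqF // ltr_wpDl.
have hA : (u @ \oo) [set w | exists n, (n0 <= n)%N /\ w = u n].
  by exists n0 => // n /= hn; exists n; split.
have := cv [set w | exists n, (n0 <= n)%N /\ w = u n] (ball v e') hA (nbhsx_ballx _ _ he').
- case=> w [[n [hn ->]] hb]; exists n; split => //.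
  apply: en_lt_sq; first exact: ltW.
  apply: (@le_lt_trans _ _ (D * e' ^+ 2)).
    apply: nsq_coord_le => k; rewrite !mxE distrC; apply: ltW.
    exact: ball_coord hb k.
  rewrite hee; nra.
Qed.

Definition lsc (f : 'rV[R]_d -> R) v := forall e, 0 < e ->
  exists2 del, 0 < del & forall w, en (w - v) < del -> f v <= f w + e.
Definition seqclosed (S : set 'rV[R]_d) := forall v,
  (forall e, 0 < e -> exists2 s, S s & en (s - v) < e) -> S v.

Lemma argmin_exists (S : set 'rV[R]_d) (f : 'rV[R]_d -> R) s0 B :
  S s0 -> (forall s, S s -> 0 <= f s) ->
  (forall s, S s -> f s <= f s0 + 1 -> en s <= B) ->
  seqclosed S -> (forall v, lsc f v) ->
  exists2 v, S v & forall s, S s -> f v <= f s.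
Proof.
move=> Ss0 f0 fB Scl flsc.
set E := f @` S.
have hl : has_lbound E by exists 0 => _ [s Ss <-]; exact: f0.
have hi : has_inf E by split => //; exists (f s0); exists s0.
set I := inf E.
have hI : forall s, S s -> I <= f s by move=> s Ss; apply: ge_inf => //; exists s.
have hs : forall n : nat, exists s, S s /\ f s < I + (n.+1%:R)^-1.
  move=> n; have hp : 0 < (n.+1%:R)^-1 :> R by rewrite invr_gt0 ltr0n.
  have [_ [s Ss <-] h] := inf_adherent hp hi.
  by exists s.
have [u hu] := choice hs.
have ub : forall n, en (u n) <= B.
  move=> n; have [Su fu] := hu n; apply: fB => //.
  apply: (le_trans (ltW fu)); rewrite lerD ?hI //.
  by rewrite invf_le1 // ?ler1n // ltr0n.
have [v hv] := cluster_seq ub.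
have Sv : S v.
  apply: Scl => e he; have [n [_ hn]] := hv e he 0%N.
  by exists (u n) => //; case: (hu n).
exists v => // s Ss; apply: le_trans (hI s Ss).
apply/ler_addgt0Pr => e he.
have he2 : 0 < e / 2 by rewrite divr_gt0.
have [del hdel hf] := flsc v (e / 2) he2.
set n0 := Num.Def.trunc ((e / 2)^-1).
have hn0 : (n0.+1%:R)^-1 < e / 2.
  rewrite -(invrK (e / 2)) ltf_pV2 ?posrE ?invr_gt0 ?ltr0n //.
  exact: truncnS_gt.
have [n [hn hnv]] := hv del hdel n0.
apply: (le_trans (hf _ hnv)).
have [_ fu] := hu n.
have : (n.+1%:R)^-1 <= (n0.+1%:R)^-1 :> R.
  by rewrite lef_pV2 ?posrE ?ltr0n // ler_nat ltnS.
move=> h1.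
have h2 : f (u n) <= I + e / 2 by apply: (le_trans (ltW fu)); rewrite lerD2l; exact: (le_trans h1 (ltW hn0)).
apply: (le_trans (lerD h2 (lexx (e / 2)))); rewrite -addrA lerD2l; lra.
Qed.
End Clus.
Section Proj.
Variables (R : realType) (d : nat).
Implicit Types (S : set 'rV[R]_d).

Lemma lsc_nsqB (v0 : 'rV[R]_d) v : lsc (fun w => nsq (w - v0)) v.
Proof.
move=> e he; set E := en (v - v0).
have hE : 0 <= E by apply: en_ge0.
have hp : 0 < 2 * E + 3 by lra.
exists (Num.min 1 (e / (2 * E + 3))).
  by rewrite lt_min ltr01 divr_gt0.
move=> w; rewrite lt_min => /andP [h1 h2].
set a := en (w - v0); set h := en (w - v).
have ha : 0 <= a by apply: en_ge0.
have hh : 0 <= h by apply: en_ge0.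
have t1 : E <= a + h by rewrite /E /a /h (enBC w v) [X in _ <= X]addrC; apply: en_tri.
have t2 : a <= E + h by rewrite /E /a /h [X in _ <= X]addrC; apply: en_tri.
have t3 : h * (2 * E + 3) <= e.
  by rewrite -ler_pdivlMr //; apply: ltW.
rewrite -!en_sq -/E -/a.
have : E ^+ 2 <= (a + h) ^+ 2 by rewrite ler_pXn2r // ?nnegrE // addr_ge0.
have u1 : h * a <= h * (E + h) by rewrite ler_wpM2l.
have u2 : h * h <= h * 1 by rewrite ler_wpM2l // ltW.
rewrite !expr2; lra.
Qed.

Definition proj S (v0 : 'rV[R]_d) :=
  xget 0 [set p | S p /\ forall c, S c -> nsq (p - v0) <= nsq (c - v0)].

Lemma en_le_1nsq (v : 'rV[R]_d) : en v <= 1 + nsq v.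
Proof. rewrite -en_sq; have := en_ge0 v; nra. Qed.

Lemma proj_spec S v0 : (exists s, S s) -> seqclosed S ->
  S (proj S v0) /\ forall c, S c -> nsq (proj S v0 - v0) <= nsq (c - v0).
Proof.
move=> [s0 Ss0] Scl; rewrite /proj.
suff ex : exists p, [set p | S p /\ forall c, S c -> nsq (p - v0) <= nsq (c - v0)] p.
  exact: (xgetPex 0 ex).
have cB : forall s, S s -> nsq (s - v0) <= nsq (s0 - v0) + 1 ->
    en s <= en v0 + (1 + (nsq (s0 - v0) + 1)).
  move=> s Ss hs.
  have h1 := en_le_1nsq (s - v0).
  have h2 : en s <= en (s - v0) + en v0.
    by have := en_tri s v0 0; rewrite !subr0.
  lra.
have [v Sv hv] := @argmin_exists R d S (fun w => nsq (w - v0)) s0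
  (en v0 + (1 + (nsq (s0 - v0) + 1))) Ss0 (fun s _ => nsq_ge0 _) cB Scl (@lsc_nsqB v0).
by exists v.
Qed.

Definition convex S := forall p c, S p -> S c -> forall s, 0 <= s <= 1 ->
  S (p + s *: (c - p)).

Lemma proj_obtuse S v0 : (exists s, S s) -> seqclosed S -> convex S ->
  forall c, S c -> nsq (proj S v0 - v0) + nsq (c - proj S v0) <= nsq (c - v0).
Proof.
move=> ne Scl Scv c Sc.
have [Sp hp] := proj_spec v0 ne Scl.
set p := proj S v0 in Sp hp *.
set D := dot (p - v0) (c - p).
set Q := nsq (c - p).
have hQ : 0 <= Q by apply: nsq_ge0.
have key : forall s, 0 <= s <= 1 -> 0 <= 2 * s * D + s ^+ 2 * Q.
  move=> s hs; have := hp _ (Scv _ _ Sp Sc s hs).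
  have -> : p + s *: (c - p) - v0 = (p - v0) + s *: (c - p).
    by rewrite addrAC.
  by rewrite (nsqD (p - v0)) nsqZ dotZr -/D -/Q; lra.
have hD : 0 <= D.
  rewrite leNgt; apply/negP => hD.
  have hQD : 0 < Q - D by lra.
  set s := - D / (Q - D).
  have hs0 : 0 < s by rewrite /s divr_gt0 // oppr_gt0.
  have hs1 : s <= 1 by rewrite /s ler_pdivrMr //; lra.
  have := key s (ltac:(by rewrite (ltW hs0) hs1)).
  have e : (Q - D) ^+ 2 * (2 * s * D + s ^+ 2 * Q) = D ^+ 2 * (2 * D - Q).
    by rewrite /s; field; rewrite gt_eqF.
  move=> h.
  have : 0 <= (Q - D) ^+ 2 * (2 * s * D + s ^+ 2 * Q) by rewrite mulr_ge0 // sqr_ge0.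
  have hD2 : 0 < D ^+ 2 by rewrite expr2 nmulr_rgt0.
  rewrite e pmulr_rge0 //; lra.
have -> : c - v0 = (c - p) + (p - v0) by rewrite addrA subrK.
rewrite (nsqD (c - p)) dotC -/D -/Q; lra.
Qed.

End Proj.
Section Hset.
Variables (R : realType) (d : nat).

Definition Hset (J : finType) (a : J -> 'rV[R]_d) : set 'rV[R]_d :=
  [set w | forall j, 1 <= dot (a j) w].

Lemma Hset_seqclosed (J : finType) (a : J -> 'rV[R]_d) : seqclosed (Hset a).
Proof.
move=> v hv j; rewrite leNgt; apply/negP => hlt.
set g := 1 - dot (a j) v.
have hg : 0 < g by rewrite /g subr_gt0.
have hp : 0 < g / (en (a j) + 1) by rewrite divr_gt0 // ltr_wpDl // en_ge0.
have [s Hs hs] := hv _ hp.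
have := Hs j.
have -> : dot (a j) s = dot (a j) v + dot (a j) (s - v) by rewrite dotBr addrC subrK.
have h1 := CSn (a j) (s - v).
have h2 : en (a j) * en (s - v) <= en (a j) * (g / (en (a j) + 1)).
  by rewrite ler_wpM2l ?en_ge0 // ltW.
have h3 : en (a j) * (g / (en (a j) + 1)) < g.
  rewrite mulrA ltr_pdivrMr ?ltr_wpDl ?en_ge0 //; lra.
have hgd : g = 1 - dot (a j) v by [].
lra.
Qed.

Lemma Hset_convex (J : finType) (a : J -> 'rV[R]_d) : convex (Hset a).
Proof.
move=> p c Hp Hc s /andP [s0 s1] j.
rewrite dotDr dotZr dotBr.
have := Hp j; have := Hc j; nra.
Qed.

Lemma Hset_scale (J : finType) (a : J -> 'rV[R]_d) v eta :
  0 <= eta < 1 -> (forall j, 1 - eta <= dot (a j) v) -> Hset a ((1 - eta)^-1 *: v).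
Proof.
move=> /andP [e0 e1] h j; rewrite dotZr.
rewrite ler_pdivlMl ?subr_gt0 // mulr1; exact: h.
Qed.

Lemma Hset_neq0 (J : finType) (a : J -> 'rV[R]_d) v (j : J) : Hset a v -> v != 0.
Proof. by move=> h; apply/negP => /eqP e; have := h j; rewrite e dot0r ler10. Qed.

End Hset.

Section Data.
Variables (R : realType) (M N d : nat).
Variables (x : 'I_M -> 'I_N -> 'rV[R]_d) (y : 'I_M -> 'I_N -> R).
Hypothesis HM : (0 < M)%N.
Hypothesis HN : (0 < N)%N.

Definition av i j := y i j *: x i j.

Lemma mE i j w : y i j * dot (x i j) w = dot (av i j) w.
Proof. by rewrite /av dotZl. Qed.

Lemma Cset_H i : Cset x y i = Hset (av i).
Proof.
rewrite /Cset /Hset; apply/seteqP; split => w /= h j; first by rewrite -mE.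
by rewrite mE.
Qed.

Lemma Cbar_H : Cbar x y = Hset (fun ij : 'I_M * 'I_N => av ij.1 ij.2).
Proof.
rewrite /Cbar /Hset; apply/seteqP; split => w /= h.
  by move=> [i j] /=; rewrite -mE; exact: (h i j).
by move=> i j; rewrite mE; exact: (h (i, j)).
Qed.

End Data.
Section AvgProj.
Variables (R : realType) (M N d : nat).
Variables (x : 'I_M -> 'I_N -> 'rV[R]_d) (y : 'I_M -> 'I_N -> R).
Hypothesis HM : (0 < M)%N.
Hypothesis HN : (0 < N)%N.
Hypothesis HCb : exists w, Cbar x y w.

Lemma Ci_ne i : exists s, Cset x y i s.
Proof. by case: HCb => w hw; exists w; apply: hw. Qed.
Lemma Ci_cl i : seqclosed (Cset x y i).
Proof. by rewrite Cset_H; apply: Hset_seqclosed. Qed.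
Lemma Ci_cv i : convex (Cset x y i).
Proof. by rewrite Cset_H; apply: Hset_convex. Qed.
Lemma Cb_cl : seqclosed (Cbar x y).
Proof. by rewrite Cbar_H; apply: Hset_seqclosed. Qed.
Lemma Cb_cv : convex (Cbar x y).
Proof. by rewrite Cbar_H; apply: Hset_convex. Qed.

Definition Pr i v := proj (Cset x y i) v.
Definition Tavg v := (M%:R)^-1 *: \sum_i Pr i v.
Definition vk K := iter K Tavg 0.

Lemma Pr_in i v : Cset x y i (Pr i v).
Proof. have := proj_spec v (Ci_ne i) (Ci_cl (i:=i)). case. exact. Qed.
Lemma Pr_obt i v c : Cset x y i c -> nsq (Pr i v - v) + nsq (c - Pr i v) <= nsq (c - v).
Proof. exact: (proj_obtuse v (Ci_ne i) (Ci_cl (i:=i)) (Ci_cv (i:=i))). Qed.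

Lemma HMr : (0 : R) < M%:R. Proof. by rewrite ltr0n. Qed.

Lemma sum_const_vec (c : 'rV[R]_d) : \sum_(i < M) c = M%:R *: c.
Proof. by rewrite sumr_const card_ord scaler_nat. Qed.

Lemma jensen (u : 'I_M -> 'rV[R]_d) :
  nsq ((M%:R)^-1 *: \sum_i u i) <= (M%:R)^-1 * \sum_i nsq (u i).
Proof.
set W := (M%:R)^-1 *: \sum_i u i.
have hS : \sum_i u i = M%:R *: W.
  by rewrite /W scalerA divff ?scale1r // gt_eqF // HMr.
have h0 : 0 <= \sum_i nsq (u i - W) by apply: sumr_ge0 => i _; apply: nsq_ge0.
have e : \sum_i nsq (u i - W) = \sum_i nsq (u i) - M%:R * nsq W.
  transitivity (\sum_i (nsq (u i) - 2 * dot (u i) W + nsq W)).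
    by apply: eq_bigr => i _; rewrite nsqB.
  rewrite big_split /= sumrB -mulr_sumr -dot_suml hS dotZl sumr_const card_ord.
  rewrite /nsq -mulr_natl; ring.
rewrite e subr_ge0 in h0.
by rewrite ler_pdivlMl ?HMr.
Qed.

Lemma fejer v c : Cbar x y c ->
  nsq (Tavg v - c) + (M%:R)^-1 * \sum_i nsq (Pr i v - v) <= nsq (v - c).
Proof.
move=> hc.
have e : Tavg v - c = (M%:R)^-1 *: \sum_i (Pr i v - c).
  rewrite sumrB sum_const_vec scalerBr scalerA mulVf ?scale1r //.
  by rewrite gt_eqF // HMr.
rewrite e.
apply: (le_trans (lerD (jensen _) (lexx _))).
rewrite -mulrDr -big_split /=.
have h : \sum_i (nsq (Pr i v - c) + nsq (Pr i v - v)) <= \sum_(i < M) nsq (v - c).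
  apply: ler_sum => i _; rewrite (nsqBC (Pr i v) c) (nsqBC v c) addrC; exact: Pr_obt (hc i).
apply: (le_trans (ler_wpM2l _ h)); first by rewrite invr_ge0 ler0n.
have -> : \sum_(i < M) nsq (v - c) = M%:R * nsq (v - c) by rewrite sumr_const card_ord mulr_natl.
rewrite mulrA mulVf ?mul1r //.
by rewrite gt_eqF // HMr.
Qed.

End AvgProj.
Lemma nonincr_le (R : realType) (f : nat -> R) : (forall K, f K.+1 <= f K) ->
  forall K0 K, (K0 <= K)%N -> f K <= f K0.
Proof.
move=> h K0 K hK; rewrite -(subnK hK).
elim: (K - K0)%N => [|n IH]; first by rewrite add0n.
by rewrite addSn; apply: le_trans (h _) IH.
Qed.

Section AvgConv.
Variables (R : realType) (M N d : nat).
Variables (x : 'I_M -> 'I_N -> 'rV[R]_d) (y : 'I_M -> 'I_N -> R).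
Hypothesis HM : (0 < M)%N.
Hypothesis HN : (0 < N)%N.
Hypothesis HCb : exists w, Cbar x y w.

Local Notation Pr' := (Pr x y).
Local Notation vk' := (vk x y).

Definition rk K := (M%:R)^-1 * \sum_i nsq (Pr' i (vk' K) - vk' K).

Lemma rk_ge0 K : 0 <= rk K.
Proof. by rewrite /rk mulr_ge0 ?invr_ge0 ?ler0n // sumr_ge0 // => i _; apply: nsq_ge0. Qed.

Lemma rk_term K i : nsq (Pr' i (vk' K) - vk' K) <= M%:R * rk K.
Proof.
rewrite /rk mulrA mulfV ?mul1r; last by rewrite gt_eqF // ltr0n.
rewrite (bigD1 i) //= lerDl; apply: sumr_ge0 => j _; exact: nsq_ge0.
Qed.

Lemma vkS K : vk' K.+1 = Tavg x y (vk' K).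
Proof. by rewrite /vk iterS. Qed.

Lemma fejer_k c K : Cbar x y c -> nsq (vk' K.+1 - c) + rk K <= nsq (vk' K - c).
Proof. by move=> hc; rewrite vkS; apply: fejer. Qed.

Lemma fejer_mono c : Cbar x y c -> forall K0 K, (K0 <= K)%N ->
  nsq (vk' K - c) <= nsq (vk' K0 - c).
Proof.
move=> hc; apply: (nonincr_le (f := fun K => nsq (vk' K - c))) => K.
have := fejer_k K hc; have := rk_ge0 K; lra.
Qed.

Lemma avgproj_conv : exists vs, Cbar x y vs /\
  forall e, 0 < e -> exists K0, forall K, (K0 <= K)%N -> en (vk' K - vs) < e.
Proof.
case: HCb => c0 hc0.
set D := fun K => nsq (vk' K - c0).
have Dge0 : forall K, 0 <= D K by move=> K; apply: nsq_ge0.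
have hl : has_lbound (range D) by exists 0 => _ [K _ <-]; apply: Dge0.
have hi : has_inf (range D) by split => //; exists (D 0%N); exists 0%N.
set I := inf (range D).
have hI : forall K, I <= D K by move=> K; apply: ge_inf => //; exists K.
have rk0 : forall e, 0 < e -> exists K0, forall K, (K0 <= K)%N -> rk K < e.
  move=> e he; have [_ [K0 _ <-] hK0] := inf_adherent he hi.
  exists K0 => K hK.
  have h1 := fejer_k K hc0; have h2 := hI K.+1; have h3 := fejer_mono hc0 hK.
  rewrite -/(D K) -/(D K.+1) -/(D K0) in h1 h3.
  lra.
have vb : forall K, en (vk' K) <= en c0 + en c0.
  move=> K; have h := fejer_mono hc0 (leq0n K).
  have : vk' 0 = 0 by [].
  move=> e0; rewrite e0 sub0r nsqN in h.
  have h2 : en (vk' K - c0) <= en c0 by apply: en_le_sq; [apply: en_ge0|rewrite en_sq].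
  have h3 : en (vk' K) <= en (vk' K - c0) + en c0.
    by have := en_tri (vk' K) c0 0; rewrite !subr0.
  lra.
have [vs hvs] := cluster_seq vb.
have Cvs : Cbar x y vs.
  move=> i; have hcl : seqclosed (Cset x y i) := Ci_cl (i:=i).
  apply: hcl => e he.
  have he2 : 0 < e / 2 by rewrite divr_gt0.
  have hq : 0 < (e / 2) ^+ 2 / M%:R by rewrite divr_gt0 ?exprn_gt0 ?ltr0n.
  have [K0 hK0] := rk0 _ hq.
  have [K [hK hKv]] := hvs _ he2 K0.
  exists (Pr' i (vk' K)); first exact: Pr_in.
  have h1 : en (Pr' i (vk' K) - vk' K) < e / 2.
    apply: en_lt_sq; first exact: ltW.
    apply: (le_lt_trans (rk_term K i)).
    by rewrite -ltr_pdivlMl ?ltr0n // mulrC; apply: hK0.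
  have := en_tri (Pr' i (vk' K)) (vk' K) vs; lra.
exists vs; split => // e he.
have [K0 [_ hK0]] := hvs e he 0%N.
exists K0 => K hK.
apply: (le_lt_trans _ hK0); apply: en_le_sq; first exact: en_ge0.
by rewrite en_sq; apply: fejer_mono.
Qed.

End AvgConv.
Section LSC.
Variables (R : realType) (d : nat).
Implicit Types (f g : 'rV[R]_d -> R) (v : 'rV[R]_d).

Lemma lsc_ext f g v : (forall w, f w = g w) -> lsc g v -> lsc f v.
Proof.
move=> e h eps he; have [del hd hg] := h eps he; exists del => // w hw.
by rewrite !e; apply: hg.
Qed.

Lemma lsc_const (c : R) v : lsc (fun _ => c) v.
Proof. by move=> e he; exists 1 => // w _; rewrite lerDl ltW. Qed.

Lemma lsc_add f g v : lsc f v -> lsc g v -> lsc (fun w => f w + g w) v.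
Proof.
move=> hf hg e he; have he2 : 0 < e / 2 by rewrite divr_gt0.
have [d1 hd1 h1] := hf _ he2; have [d2 hd2 h2] := hg _ he2.
exists (Num.min d1 d2); first by rewrite lt_min hd1 hd2.
move=> w; rewrite lt_min => /andP [w1 w2].
have := h1 _ w1; have := h2 _ w2; lra.
Qed.

Lemma lsc_sum (I : finType) (F : I -> 'rV[R]_d -> R) v :
  (forall i, lsc (F i) v) -> lsc (fun w => \sum_i F i w) v.
Proof.
move=> h; rewrite /=.
have : forall r : seq I, lsc (fun w => \sum_(i <- r) F i w) v.
  elim => [|a r IH].
    by apply: (lsc_ext (g := fun _ => 0)) => [w|]; [rewrite big_nil | apply: lsc_const].
  apply: (lsc_ext (g := fun w => F a w + \sum_(i <- r) F i w)) => [w|].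
    by rewrite big_cons.
  exact: lsc_add.
by move/(_ (index_enum I)).
Qed.

Lemma lsc_scale (c : R) f v : 0 <= c -> lsc f v -> lsc (fun w => c * f w) v.
Proof.
move=> hc hf e he.
have hp : 0 < e / (c + 1) by rewrite divr_gt0 // ltr_wpDl.
have [del hd h] := hf _ hp; exists del => // w hw.
have := h _ hw => hw2.
have h3 : c * (e / (c + 1)) <= e.
  rewrite mulrA ler_pdivrMr ?ltr_wpDl //; nra.
have : c * f v <= c * (f w + e / (c + 1)) by rewrite ler_wpM2l.
lra.
Qed.

Lemma lsc_exp (a : 'rV[R]_d) v : lsc (fun w => expR (- dot a w)) v.
Proof.
move=> e he; set X := expR (- dot a v).
have hX : 0 < X by apply: expR_gt0.
have hA := en_ge0 a.
have hp : 0 < e / (X * en a + 1) by rewrite divr_gt0 // ltr_wpDl // mulr_ge0 // ltW.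
exists (e / (X * en a + 1)) => // w hw.
have e1 : expR (- dot a w) = X * expR (- dot a (w - v)).
  by rewrite /X -expRD dotBr; congr expR; ring.
have h1 : 1 - dot a (w - v) <= expR (- dot a (w - v)).
  by have := expR_ge1Dx (- dot a (w - v)).
have h2 : dot a (w - v) <= en a * en (w - v) by apply: CSn.
have h3 : X * (en a * en (w - v)) <= e.
  have : en a * en (w - v) <= en a * (e / (X * en a + 1)) by rewrite ler_wpM2l // ltW.
  have h4 : X * (en a * (e / (X * en a + 1))) <= e.
    rewrite mulrA mulrA ler_pdivrMr ?ltr_wpDl ?mulr_ge0 ?(ltW hX) //; nra.
  move=> h5; apply: le_trans h4; rewrite ler_wpM2l // ltW //.
rewrite e1.
have : X * (1 - dot a (w - v)) <= X * expR (- dot a (w - v)) by rewrite ler_wpM2l // ltW.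
have : X * dot a (w - v) <= X * (en a * en (w - v)) by rewrite ler_wpM2l // ltW.
nra.
Qed.

End LSC.
Section Local.
Variables (R : realType) (M N d : nat).
Variables (x : 'I_M -> 'I_N -> 'rV[R]_d) (y : 'I_M -> 'I_N -> R).
Hypothesis HM : (0 < M)%N.
Hypothesis HN : (0 < N)%N.
Hypothesis HCb : exists w, Cbar x y w.

Lemma local_objE i w0 lam w : local_obj x y i w0 lam w =
  \sum_j expR (- dot (av x y i j) w) + lam / 2 * nsq (w - w0).
Proof.
rewrite /local_obj enE en_sq; congr (_ + _); apply: eq_bigr => j _.
by rewrite mE.
Qed.

Lemma local_obj_ge0 i w0 lam w : 0 <= lam -> 0 <= local_obj x y i w0 lam w.
Proof.
move=> hl; rewrite local_objE addr_ge0 //.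
  by apply: sumr_ge0 => j _; apply: expR_ge0.
by rewrite mulr_ge0 ?divr_ge0 ?nsq_ge0.
Qed.

Lemma local_step_spec i w0 lam : 0 < lam ->
  forall v, local_obj x y i w0 lam (local_step x y i w0 lam) <= local_obj x y i w0 lam v.
Proof.
move=> hl; rewrite /local_step.
set F := local_obj x y i w0 lam.
suff ex : exists w, [set w | forall v, F w <= F v] w by have := xgetPex 0 ex.
set F0 := F w0.
have cB : forall s, setT s -> F s <= F0 + 1 -> en s <= en w0 + (1 + 2 * (F0 + 1) / lam).
  move=> s _ hs.
  have h1 : lam / 2 * nsq (s - w0) <= F0 + 1.
    apply: le_trans hs; rewrite /F local_objE lerDr.
    by apply: sumr_ge0 => j _; apply: expR_ge0.
  have h2 : nsq (s - w0) <= 2 * (F0 + 1) / lam.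
    rewrite ler_pdivlMr //; lra.
  have h3 := en_le_1nsq (s - w0).
  have h4 : en s <= en (s - w0) + en w0 by have := en_tri s w0 0; rewrite !subr0.
  lra.
have scl : seqclosed (@setT 'rV[R]_d) by [].
have lf : forall v, lsc F v.
  move=> v; apply: (lsc_ext (g := fun w => \sum_j expR (- dot (av x y i j) w) + lam / 2 * nsq (w - w0))).
    by move=> w; rewrite /F local_objE.
  apply: lsc_add; first by apply: lsc_sum => j; apply: lsc_exp.
  by apply: lsc_scale; [rewrite divr_ge0 // ltW | apply: lsc_nsqB].
have [v _ hv] := @argmin_exists R d setT F w0 _ I (fun s _ => local_obj_ge0 i w0 s (ltW hl)) cB scl lf.
by exists v => u; apply: hv.
Qed.


Lemma LS_core i m w0 lam t eta eps :
  0 < lam -> lam = expR (- t) -> 1 <= t -> 0 < eta -> eta <= 1 / 2 ->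
  en (t^-1 *: w0 - m) <= eta ->
  2 * N%:R <= eta ^+ 2 * t ^+ 2 ->
  6 * (N%:R + (en (Pr x y i m - m) + 1) ^+ 2 / 2) <= eta ^+ 3 * t ->
  2 * eta * (en (Pr x y i m - m) + 3 + en m) < eps / 2 ->
  eta * (2 * (en (Pr x y i m - m) + 3 + en m) + 3) *
    (2 * en (Pr x y i m - m) + (2 * (en (Pr x y i m - m) + 3 + en m) + 3))
    < (eps / 2) ^+ 2 ->
  en (t^-1 *: local_step x y i w0 lam - Pr x y i m) < eps.
Proof.
move=> hl hlt ht1 he0 he1 hm hN hQ hV hK.
set p := Pr x y i m in hQ hV hK *.
set E := en (p - m) in hQ hV hK *.
set V0 := E + 3 + en m in hV hK *.
set K1 := 2 * V0 + 3 in hK *.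
have hE : 0 <= E by apply: en_ge0.
have hmm : 0 <= en m by apply: en_ge0.
set w := local_step x y i w0 lam.
set v := t^-1 *: w.
set mt := t^-1 *: w0 in hm *.
have ht : 0 < t by lra.
have hw : w = t *: v by rewrite /v scalerA mulfV ?scale1r // gt_eqF.
have hw0 : w0 = t *: mt by rewrite /mt scalerA mulfV ?scale1r // gt_eqF.
have hp : Cset x y i p := Pr_in HCb i m.
have hpH : forall j, 1 <= dot (av x y i j) p by move=> j; rewrite -mE; apply: hp.
have hspec := local_step_spec i w0 hl (t *: p).
rewrite -/w in hspec.
set Fw := local_obj x y i w0 lam w in hspec.
set Q := nsq (p - mt).
have hup : local_obj x y i w0 lam (t *: p) <= N%:R * lam + lam / 2 * (t ^+ 2 * Q).
  rewrite local_objE; apply: lerD.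
    apply: (@le_trans _ _ (\sum_(j < N) lam)); last by rewrite sumr_const card_ord mulr_natl.
    apply: ler_sum => j _; rewrite dotZr hlt ler_expR.
    have := hpH j; nra.
  have -> : t *: p - w0 = t *: (p - mt) by rewrite hw0 scalerBr.
  by rewrite nsqZ.
have hL1 : lam / 2 * (t ^+ 2 * nsq (v - mt)) <= Fw.
  rewrite /Fw local_objE.
  have -> : w - w0 = t *: (v - mt) by rewrite hw hw0 scalerBr.
  rewrite nsqZ lerDr; apply: sumr_ge0 => j _; apply: expR_ge0.
have hL2 : forall j, expR (- (t * dot (av x y i j) v)) <= Fw.
  move=> j; rewrite /Fw local_objE.
  have h0 : 0 <= lam / 2 * nsq (w - w0) by rewrite mulr_ge0 ?divr_ge0 ?nsq_ge0 // ltW.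
  suff : expR (- (t * dot (av x y i j) v)) <= \sum_j expR (- dot (av x y i j) w) by lra.
  have -> : t * dot (av x y i j) v = dot (av x y i j) w by rewrite -dotZr -hw.
  rewrite (bigD1 j) //= lerDl; apply: sumr_ge0 => k _; apply: expR_ge0.
have hQb : en (p - mt) <= E + eta.
  have := en_tri p m mt; rewrite (enBC m mt) -/E; lra.
have hQ2 : Q <= (E + eta) ^+ 2 by apply: sq_le_en => //; lra.
have hQ0 : Q <= (E + 1) ^+ 2.
  apply: (le_trans hQ2); have h1 : 0 <= E + eta by lra.
  have h2 : E + eta <= E + 1 by lra.
  rewrite !expr2; nra.
have hFw : Fw <= N%:R * lam + lam / 2 * (t ^+ 2 * Q) := le_trans hspec hup.
have hvm1 : t ^+ 2 * nsq (v - mt) <= 2 * N%:R + t ^+ 2 * Q.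
  have : lam * (t ^+ 2 * nsq (v - mt)) <= lam * (2 * N%:R + t ^+ 2 * Q) by lra.
  by rewrite ler_pM2l.
have hvm2 : nsq (v - mt) <= (E + 2 * eta) ^+ 2.
  have : t ^+ 2 * nsq (v - mt) <= t ^+ 2 * (eta ^+ 2 + (E + eta) ^+ 2).
    have : t ^+ 2 * Q <= t ^+ 2 * (E + eta) ^+ 2 by rewrite ler_wpM2l // sqr_ge0.
    lra.
  rewrite ler_pM2l ?exprn_gt0 // => h; apply: (le_trans h).
  have h2 : 0 <= E * eta by rewrite mulr_ge0 // ltW.
  rewrite !expr2; nra.
have hvm : en (v - mt) <= E + 2 * eta by apply: en_le_sq => //; lra.
have hmarg : forall j, 1 - eta <= dot (av x y i j) v.
  move=> j; rewrite leNgt; apply/negP => hq.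
  set q := dot (av x y i j) v in hq.
  have h1 : lam * expR (t * eta) <= expR (- (t * q)).
    rewrite hlt -expRD ler_expR; nra.
  have h2 : expR (t * eta) <= N%:R + t ^+ 2 * (E + 1) ^+ 2 / 2.
    have h3 := hL2 j; rewrite -/q in h3.
    have : lam * expR (t * eta) <= lam * (N%:R + t ^+ 2 * (E + 1) ^+ 2 / 2).
      have : t ^+ 2 * Q <= t ^+ 2 * (E + 1) ^+ 2 by rewrite ler_wpM2l // sqr_ge0.
      move=> h4; have : lam * (t ^+ 2 * Q) <= lam * (t ^+ 2 * (E + 1) ^+ 2) by rewrite ler_wpM2l // ltW.
      lra.
    by rewrite ler_pM2l.
  have hte : 0 <= t * eta by rewrite mulr_ge0 // ltW.
  have h4 := expR_ge1Dxn 2 hte.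
  have h5 : t ^+ 2 * (6 * (N%:R + (E + 1) ^+ 2 / 2)) <= t ^+ 2 * (eta ^+ 3 * t).
    by rewrite ler_wpM2l // sqr_ge0.
  have h6 : N%:R <= t ^+ 2 * N%:R.
    rewrite -[X in X <= _]mul1r ler_wpM2r ?ler0n //.
    by rewrite expr2; nra.
  have e7 : (t * eta) ^+ 3 = t ^+ 2 * (eta ^+ 3 * t) by ring.
  have e8 : (3`!)%:R = 6 :> R by [].
  rewrite e8 e7 in h4.
  have hNn : 0 <= N%:R :> R by rewrite ler0n.
  lra.
have heta1 : eta < 1 by lra.
set c := (1 - eta)^-1 *: v.
have hc : Cset x y i c.
  rewrite Cset_H; apply: Hset_scale => //; first by rewrite (ltW he0) heta1.
have hv0 : en v <= V0.
  have := en_tri v mt 0; rewrite !subr0.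
  have := en_tri mt m 0; rewrite !subr0.
  rewrite /V0; lra.
have hcv : en (c - v) <= 2 * eta * V0.
  have -> : c - v = ((1 - eta)^-1 - 1) *: v by rewrite scalerBl scale1r.
  rewrite enZ.
  have hi1 : 1 <= (1 - eta)^-1 by rewrite invf_ge1; lra.
  have hi2 : (1 - eta)^-1 <= 1 + 2 * eta.
    rewrite -div1r ler_pdivrMr; [nra | lra].
  rewrite ger0_norm; last by lra.
  have : ((1 - eta)^-1 - 1) * en v <= (2 * eta) * en v by rewrite ler_wpM2r ?en_ge0 //; lra.
  have : (2 * eta) * en v <= (2 * eta) * V0 by rewrite ler_wpM2l //; lra.
  lra.
have hcm : en (c - m) <= E + eta * K1.
  have := en_tri c v m; have := en_tri v mt m; rewrite /K1; lra.
have hob := Pr_obt HCb m hc; rewrite -/p in hob.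
have hK1 : 0 <= K1 by rewrite /K1 /V0; lra.
have hcm2 : nsq (c - m) <= (E + eta * K1) ^+ 2.
  by apply: sq_le_en => //; rewrite addr_ge0 // mulr_ge0 // ltW.
have hpm : nsq (p - m) = E ^+ 2 by rewrite -en_sq.
have hcp : nsq (c - p) < (eps / 2) ^+ 2.
  have : eta * K1 <= K1 by rewrite -[X in _ <= X]mul1r ler_wpM2r //; lra.
  move=> h; have : (E + eta * K1) ^+ 2 - E ^+ 2 <= eta * K1 * (2 * E + K1).
    rewrite !expr2; have : 0 <= eta * K1 by rewrite mulr_ge0 // ltW.
    nra.
  lra.
have hcp2 : en (c - p) < eps / 2.
  apply: en_lt_sq => //; have : 0 <= eta * V0 by rewrite mulr_ge0 ?(ltW he0) // /V0; lra.
  lra.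
have := en_tri v c p; rewrite (enBC v c); lra.
Qed.

End Local.
Section Dirn.
Variables (R : realType) (d : nat).
Implicit Types (u v w : 'rV[R]_d).

Lemma dirnE v : dirn v = (en v)^-1 *: v. Proof. by []. Qed.

Lemma en_sum (I : finType) (u : I -> 'rV[R]_d) : en (\sum_i u i) <= \sum_i en (u i).
Proof.
elim/big_ind2 : _ => [|a b c e h1 h2|i _]; first by rewrite en0.
- by apply: le_trans (enD _ _) _; apply: lerD.
- by [].
Qed.

Lemma dirn_scale t v : 0 < t -> dirn (t *: v) = dirn v.
Proof.
move=> ht; rewrite !dirnE enZ gtr0_norm // scalerA.
have [/en_eq0 ->|hv] := eqVneq (en v) 0; first by rewrite !scaler0.
by congr (_ *: v); field; rewrite hv gt_eqF.
Qed.

Lemma en_dirn v : 0 < en v -> en (dirn v) = 1.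
Proof.
move=> h; rewrite dirnE enZ ger0_norm; last by rewrite invr_ge0 ltW.
by rewrite mulVf // gt_eqF.
Qed.

Lemma dirn_cont (a b : 'rV[R]_d) : 0 < en b -> en (dirn a - dirn b) <= 2 * en (a - b) / en b.
Proof.
move=> hb.
have hab : 0 <= en (a - b) by apply: en_ge0.
have [ha|ha] := eqVneq (en a) 0.
  rewrite (en_eq0 ha) dirnE scaler0 sub0r enN en_dirn //.
  rewrite -(en_eq0 ha) -enN opprB (en_eq0 ha) subr0 in hab *.
  by rewrite ler_pdivlMr // mul1r; have := en_ge0 b; lra.
have ha' : 0 < en a by rewrite lt_def ha en_ge0.
have -> : dirn a - dirn b = (en b)^-1 *: (a - b) + ((en a)^-1 - (en b)^-1) *: a.
  by rewrite !dirnE scalerBr scalerBl [RHS]addrC addrA subrK.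
apply: (le_trans (enD _ _)).
rewrite !enZ (ger0_norm (x := (en b)^-1)); last by rewrite invr_ge0 ltW.
have e1 : `|(en a)^-1 - (en b)^-1| * en a = `|en b - en a| / en b.
  have -> : (en a)^-1 - (en b)^-1 = (en b - en a) / (en a * en b).
    by field; rewrite gt_eqF // gt_eqF.
  rewrite normrM normfV normrM (gtr0_norm ha') (gtr0_norm hb).
  by field; rewrite gt_eqF // gt_eqF.
rewrite e1.
have h1 : `|en b - en a| <= en (a - b).
  rewrite ler_norml; apply/andP; split.
    by have := en_rev a b; lra.
  by have := en_rev b a; rewrite enBC; lra.
have hib : 0 < (en b)^-1 by rewrite invr_gt0.
nra.
Qed.

Lemma cvg_en (T : Type) (F : set_system T) (FF : Filter F) (f : T -> 'rV[R]_d) l :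
  (forall e, 0 < e -> \forall t \near F, en (f t - l) < e) -> f @ F --> l.
Proof.
move=> h; apply/cvgrPdist_lt => e he.
apply: filterS (h e he) => t ht; apply: le_lt_trans (normr_le_en _) _.
by rewrite enBC.
Qed.

End Dirn.
Section LocalLim.
Variables (R : realType) (M N d : nat).
Variables (x : 'I_M -> 'I_N -> 'rV[R]_d) (y : 'I_M -> 'I_N -> R).
Hypothesis HM : (0 < M)%N.
Hypothesis HN : (0 < N)%N.
Hypothesis HCb : exists w, Cbar x y w.

Definition tL (lam : R) := - ln lam.

Lemma tL_big (T : R) : \forall lam \near 0^'+, T < tL lam /\ 0 < lam.
Proof.
near=> lam.
have hl : 0 < lam by near: lam; exact: nbhs_right_gt.
have hlT : lam < expR (- T) by near: lam; exact: nbhs_right_lt (expR_gt0 _).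
split => //.
have : ln lam < ln (expR (- T)) by rewrite ltr_ln // posrE expR_gt0.
by rewrite expRK /tL; lra.
Unshelve. all: by end_near.
Qed.

Lemma LS i (w0 : R -> 'rV[R]_d) m :
  (forall e, 0 < e -> \forall lam \near 0^'+, en ((tL lam)^-1 *: w0 lam - m) < e) ->
  forall eps, 0 < eps ->
  \forall lam \near 0^'+, en ((tL lam)^-1 *: local_step x y i (w0 lam) lam - Pr x y i m) < eps.
Proof.
move=> hw eps heps.
set E := en (Pr x y i m - m).
set V0 := E + 3 + en m.
set K1 := 2 * V0 + 3.
have hE : 0 <= E by apply: en_ge0.
have hV0 : 0 <= V0 by rewrite /V0; have := en_ge0 m; lra.
have hK1 : 0 <= K1 by rewrite /K1; lra.
have hX : 0 <= K1 * (2 * E + K1) by rewrite mulr_ge0 //; lra.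
set eta := Num.min (1 / 2) (Num.min (eps / (4 * V0 + 4)) ((eps / 2) ^+ 2 / (K1 * (2 * E + K1) + 1))).
have heta : 0 < eta.
  rewrite /eta !lt_min divr_gt0 //= ?divr_gt0 ?exprn_gt0 ?divr_gt0 //; lra.
have he1 : eta <= 1 / 2 by rewrite /eta ge_min lexx.
have he2 : eta <= eps / (4 * V0 + 4) by rewrite /eta !ge_min lexx orbT.
have he3 : eta <= (eps / 2) ^+ 2 / (K1 * (2 * E + K1) + 1) by rewrite /eta !ge_min lexx !orbT.
have hV : 2 * eta * V0 < eps / 2.
  have : eta * (4 * V0 + 4) <= eps by rewrite -ler_pdivlMr //; lra.
  nra.
have hK : eta * K1 * (2 * E + K1) < (eps / 2) ^+ 2.
  have : eta * (K1 * (2 * E + K1) + 1) <= (eps / 2) ^+ 2 by rewrite -ler_pdivlMr //; lra.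
  nra.
set T := 1 + 2 * N%:R / eta ^+ 2 + 6 * (N%:R + (E + 1) ^+ 2 / 2) / eta ^+ 3.
have hN0 : 0 <= N%:R :> R by rewrite ler0n.
have hT1 : 0 <= 2 * N%:R / eta ^+ 2.
  by apply: divr_ge0; [lra | apply: exprn_ge0; exact: ltW].
have hT2 : 0 <= 6 * (N%:R + (E + 1) ^+ 2 / 2) / eta ^+ 3.
  apply: divr_ge0; last by apply: exprn_ge0; exact: ltW.
  have : 0 <= (E + 1) ^+ 2 by apply: sqr_ge0.
  lra.
have H1 := hw eta heta.
have H2 := tL_big T.
near=> lam.
have [hT hl] : T < tL lam /\ 0 < lam by near: lam; exact: H2.
have hm : en ((tL lam)^-1 *: w0 lam - m) < eta by near: lam; exact: H1.
set t := tL lam in hT hm *.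
have ht1 : 1 <= t by rewrite /T in hT; lra.
have ht0 : 0 < t by lra.
apply: (LS_core HCb (t := t) (eta := eta)) => //.
- by rewrite /t /tL opprK lnK // posrE.
- exact: ltW.
- have : 2 * N%:R / eta ^+ 2 <= t by rewrite /T in hT; lra.
  rewrite ler_pdivrMr ?exprn_gt0 // => h.
  have htt : t <= t ^+ 2 by rewrite expr2; nra.
  have : eta ^+ 2 * t <= eta ^+ 2 * t ^+ 2.
    by rewrite ler_wpM2l // exprn_ge0 // ltW.
  lra.
- have : 6 * (N%:R + (E + 1) ^+ 2 / 2) / eta ^+ 3 <= t by rewrite /T in hT; lra.
  move=> h; by rewrite [X in _ <= X]mulrC -ler_pdivrMr // exprn_gt0.
Unshelve. all: by end_near.
Qed.

Lemma LGD_scaled K : forall e, 0 < e ->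
  \forall lam \near 0^'+, en ((tL lam)^-1 *: localGD x y lam K - vk x y K) < e.
Proof.
elim: K => [|K IH] e he.
  by apply: nearW => lam; rewrite /localGD /vk /= scaler0 subr0 en0.
have he2 : 0 < e / 2 by rewrite divr_gt0.
have H := filter_forall _ (fun i => LS i (w0 := fun lam => localGD x y lam K) IH he2).
near=> lam.
have hi : forall i : 'I_M, en ((tL lam)^-1 *: local_step x y i (localGD x y lam K) lam - Pr x y i (vk x y K)) < e / 2.
  by near: lam; exact: H.
have -> : localGD x y lam K.+1 = (M%:R)^-1 *: \sum_i local_step x y i (localGD x y lam K) lam.
  by rewrite /localGD iterS.
rewrite vkS /Tavg.
set t := tL lam.
have -> : t^-1 *: ((M%:R)^-1 *: \sum_i local_step x y i (localGD x y lam K) lam) -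
    (M%:R)^-1 *: \sum_i Pr x y i (vk x y K) =
    (M%:R)^-1 *: \sum_i (t^-1 *: local_step x y i (localGD x y lam K) lam - Pr x y i (vk x y K)).
  by rewrite sumrB scalerBr -scaler_sumr; congr (_ - _); rewrite !scalerA mulrC.
rewrite enZ ger0_norm ?invr_ge0 ?ler0n //.
apply: (le_lt_trans (ler_wpM2l _ (en_sum _))); first by rewrite invr_ge0 ler0n.
apply: (@le_lt_trans _ _ ((M%:R)^-1 * \sum_(i < M) (e / 2))).
  rewrite ler_wpM2l ?invr_ge0 ?ler0n //; apply: ler_sum => i _.
  by apply: ltW.
have -> : \sum_(i < M) (e / 2) = M%:R * (e / 2) by rewrite sumr_const card_ord mulr_natl.
have -> : (M%:R)^-1 * (M%:R * (e / 2)) = e / 2 :> R.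
  by field; rewrite gt_eqF // ltr0n.
lra.
Unshelve. all: by end_near.
Qed.

End LocalLim.
Section LocalPart.
Variables (R : realType) (M N d : nat).
Variables (x : 'I_M -> 'I_N -> 'rV[R]_d) (y : 'I_M -> 'I_N -> R).
Hypothesis HM : (0 < M)%N.
Hypothesis HN : (0 < N)%N.
Hypothesis HCb : exists w, Cbar x y w.

Lemma Cbar_en_gt0 w : Cbar x y w -> 0 < en w.
Proof.
move=> hw; rewrite Cbar_H in hw.
have := Hset_neq0 (Ordinal HM, Ordinal HN) hw.
rewrite lt_def en_ge0 andbT; apply: contra => /eqP h.
by apply/eqP; apply: en_eq0.
Qed.

Lemma local_part : exists wbar, Cbar x y wbar /\
  exists u : nat -> 'rV[R]_d,
    (\forall K \near \oo, dirn (localGD x y lam K) @[lam --> 0^'+] --> u K) /\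
    u @ \oo --> dirn wbar.
Proof.
have [vs [Cvs hconv]] := avgproj_conv HM HCb.
have hvs := Cbar_en_gt0 Cvs.
exists vs; split => //; exists (fun K => dirn (vk x y K)); split.
  have [K0 hK0] := hconv _ hvs.
  exists K0 => // K hK /=.
  have hvk : 0 < en (vk x y K).
    have := hK0 _ hK; have := en_tri vs (vk x y K) 0; rewrite !subr0 enBC; lra.
  apply: cvg_en => eps heps.
  have he : 0 < eps * en (vk x y K) / 2 by rewrite divr_gt0 // mulr_gt0.
  have H1 := LGD_scaled HM HCb K he.
  have H2 := tL_big (0 : R).
  near=> lam.
  have [ht _] : 0 < tL lam /\ 0 < lam by near: lam; exact: H2.
  have hs : en ((tL lam)^-1 *: localGD x y lam K - vk x y K) < eps * en (vk x y K) / 2.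
    by near: lam; exact: H1.
  rewrite -(dirn_scale (localGD x y lam K) (t := (tL lam)^-1)); last by rewrite invr_gt0.
  apply: (le_lt_trans (dirn_cont _ hvk)).
  rewrite ltr_pdivrMr //; lra.
apply: cvg_en => eps heps.
have he : 0 < eps * en vs / 2 by rewrite divr_gt0 // mulr_gt0.
have [K0 hK0] := hconv _ he.
exists K0 => // K hK /=.
apply: (le_lt_trans (dirn_cont _ hvs)).
rewrite ltr_pdivrMr //; have := hK0 _ hK; lra.
Unshelve. all: by end_near.
Qed.

End LocalPart.
Lemma le_sum_term (R : realType) (I : finType) (F : I -> R) i :
  (forall j, 0 <= F j) -> F i <= \sum_j F j.
Proof. by move=> h; rewrite (bigD1 i) //= lerDl sumr_ge0. Qed.

Lemma expN_quad (R : realType) (t : R) : `|t| <= 1 / 2 -> expR (- t) <= 1 - t + 2 * t ^+ 2.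
Proof.
rewrite ler_norml => /andP [h1 h2].
have h3 : 1 + t <= expR t by apply: expR_ge1Dx.
have h4 : 0 < 1 + t by lra.
rewrite expRN.
apply: (@le_trans _ _ ((1 + t)^-1)); first by rewrite lef_pV2 ?posrE // expR_gt0.
rewrite -div1r ler_pdivrMr //.
have : 0 <= t ^+ 2 * (1 + 2 * t) by rewrite mulr_ge0 ?sqr_ge0 //; lra.
rewrite !expr2; nra.
Qed.

Section Central.
Variables (R : realType) (M N d : nat).
Variables (x : 'I_M -> 'I_N -> 'rV[R]_d) (y : 'I_M -> 'I_N -> R).
Hypothesis HM : (0 < M)%N.
Hypothesis HN : (0 < N)%N.
Hypothesis HCb : exists w, Cbar x y w.

Local Notation a := (av x y).
Definition Lo (w : 'rV[R]_d) := \sum_i \sum_j expR (- dot (a i j) w).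
Definition gr (w : 'rV[R]_d) := \sum_i \sum_j expR (- dot (a i j) w) *: a i j.
Definition ZZ := 1 + \sum_i \sum_j en (a i j).
Definition L0 : R := (M * N)%:R.

Lemma ZZ_ge i j : en (a i j) <= ZZ.
Proof.
have h1 : en (a i j) <= \sum_j en (a i j).
  by apply: (@le_sum_term _ _ (fun j => en (a i j)) j) => k; apply: en_ge0.
have h2 : \sum_j en (a i j) <= \sum_i \sum_j en (a i j).
  by apply: (@le_sum_term _ _ (fun i => \sum_j en (a i j)) i) => k; apply: sumr_ge0 => *; apply: en_ge0.
rewrite /ZZ; lra.
Qed.

Lemma ZZ_gt0 : 0 < ZZ.
Proof. by rewrite /ZZ ltr_pwDl // sumr_ge0 // => i _; apply: sumr_ge0 => j _; apply: en_ge0. Qed.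

Lemma Lo_gt0 w : 0 < Lo w.
Proof.
rewrite /Lo (bigD1 (Ordinal HM)) //= ltr_pwDl //; last first.
  by apply: sumr_ge0 => i _; apply: sumr_ge0 => j _; apply: expR_ge0.
rewrite (bigD1 (Ordinal HN)) //= ltr_pwDl ?expR_gt0 //.
by apply: sumr_ge0 => j _; apply: expR_ge0.
Qed.

Lemma Lo0 : Lo 0 = L0.
Proof.
rewrite /Lo (eq_bigr (fun _ => N%:R)) => [|i _].
  by rewrite sumr_const card_ord /L0 natrM mulr_natl.
rewrite (eq_bigr (fun _ => 1)) => [|j _]; last by rewrite dot0r oppr0 expR0.
by rewrite sumr_const card_ord.
Qed.

Lemma L0_gt0 : 0 < L0. Proof. by rewrite -Lo0 Lo_gt0. Qed.

Lemma term_le_Lo w i j : expR (- dot (a i j) w) <= Lo w.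
Proof.
have h1 : expR (- dot (a i j) w) <= \sum_j expR (- dot (a i j) w).
  by apply: (@le_sum_term _ _ (fun j => expR (- dot (a i j) w)) j) => k; apply: expR_ge0.
have h2 : \sum_j expR (- dot (a i j) w) <= Lo w.
  by apply: (@le_sum_term _ _ (fun i => \sum_j expR (- dot (a i j) w)) i) => k; apply: sumr_ge0 => *; apply: expR_ge0.
lra.
Qed.

Lemma dot_gr w v : dot (gr w) v = \sum_i \sum_j expR (- dot (a i j) w) * dot (a i j) v.
Proof.
rewrite /gr dot_suml; apply: eq_bigr => i _; rewrite dot_suml; apply: eq_bigr => j _.
by rewrite dotZl.
Qed.

Lemma en_gr w : en (gr w) <= ZZ * Lo w.
Proof.
apply: (le_trans (en_sum _)).
rewrite /Lo mulr_sumr; apply: ler_sum => i _.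
apply: (le_trans (en_sum _)).
rewrite mulr_sumr; apply: ler_sum => j _.
rewrite enZ ger0_norm ?expR_ge0 // mulrC ler_wpM2r ?expR_ge0 //; exact: ZZ_ge.
Qed.

Definition wst := proj (Cbar x y) 0.

Lemma wst_spec : Cbar x y wst /\ forall c, Cbar x y c -> en wst <= en c.
Proof.
have ne : exists s, Cbar x y s by [].
have [h1 h2] := proj_spec 0 ne (@Cb_cl _ _ _ _ x y).
split => // c hc; have := h2 c hc; rewrite !subr0 => h.
by apply: en_le_sq; [apply: en_ge0 | rewrite en_sq].
Qed.

Lemma wst_gt0 : 0 < en wst.
Proof. exact: (Cbar_en_gt0 HM HN (proj1 wst_spec)). Qed.

Lemma gr_lower w : Lo w <= en (gr w) * en wst.
Proof.
apply: le_trans (CSn _ _); rewrite dot_gr /Lo; apply: ler_sum => i _; apply: ler_sum => j _.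
have := (proj1 wst_spec) i j; rewrite mE => h.
by rewrite -[X in X <= _]mulr1 ler_wpM2l ?expR_ge0.
Qed.

End Central.
Section GD.
Variables (R : realType) (M N d : nat).
Variables (x : 'I_M -> 'I_N -> 'rV[R]_d) (y : 'I_M -> 'I_N -> R).
Hypothesis HM : (0 < M)%N.
Hypothesis HN : (0 < N)%N.
Hypothesis HCb : exists w, Cbar x y w.
Variable eta : R.
Hypothesis Heta : 0 < eta.
Hypothesis Heta0 : eta * (4 * ZZ x y ^+ 2 * L0 R M N) <= 1.

Local Notation a := (av x y).
Local Notation Z := (ZZ x y).
Local Notation L0' := (L0 R M N).
Local Notation Lo' := (Lo x y).
Local Notation gr' := (gr x y).

Lemma Zpos : 0 < Z. Proof. exact: ZZ_gt0. Qed.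

Lemma descent w : Lo' w <= L0' ->
  Lo' (w + eta *: gr' w) <= Lo' w - eta * (1 - 2 * eta * Z ^+ 2 * Lo' w) * nsq (gr' w).
Proof.
move=> hL.
set G := gr' w; set Lw := Lo' w.
have hLw : 0 < Lw by apply: Lo_gt0.
have hG : en G <= Z * Lw by apply: en_gr.
have hZ := Zpos.
set C := 2 * (Z ^+ 2 * eta ^+ 2 * nsq G).
have hdel : forall i j, `|dot (a i j) (eta *: G)| <= 1 / 2.
  move=> i j; apply: (le_trans (CSabs _ _)).
  rewrite enZ gtr0_norm //.
  have h1 := ZZ_ge x y i j.
  have h2 : en (a i j) * (eta * en G) <= Z * (eta * (Z * Lw)).
    apply: ler_pM => //; first exact: en_ge0.
      by rewrite mulr_ge0 ?en_ge0 // ltW.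
    by rewrite ler_wpM2l // ltW.
  apply: (le_trans h2).
  have h3 : Z * (eta * (Z * Lw)) <= eta * (Z ^+ 2 * L0').
    have hez : 0 <= eta * (Z * Z) by rewrite mulr_ge0 ?mulr_ge0 // ltW.
    rewrite expr2; have : eta * (Z * Z) * Lw <= eta * (Z * Z) * L0'.
      by rewrite ler_wpM2l.
    have -> : Z * (eta * (Z * Lw)) = eta * (Z * Z) * Lw by ring.
    have -> : eta * (Z * Z * L0') = eta * (Z * Z) * L0' by ring.
    done.
  apply: (le_trans h3); move: Heta0; set q := eta * (Z ^+ 2 * L0'); have -> : eta * (4 * Z ^+ 2 * L0') = 4 * q by rewrite /q; ring.
  lra.
have hterm : forall i j, expR (- dot (a i j) (w + eta *: G)) <=
    expR (- dot (a i j) w) - expR (- dot (a i j) w) * dot (a i j) (eta *: G) +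
    expR (- dot (a i j) w) * C.
  move=> i j.
  set e := expR (- dot (a i j) w); set del := dot (a i j) (eta *: G).
  have he : 0 <= e by apply: expR_ge0.
  have -> : expR (- dot (a i j) (w + eta *: G)) = e * expR (- del).
    by rewrite /e /del -expRD dotDr opprD.
  have h1 := expN_quad (hdel i j); rewrite -/del in h1.
  have h2 : del ^+ 2 <= Z ^+ 2 * eta ^+ 2 * nsq G.
    apply: (le_trans (CS _ _)); rewrite nsqZ.
    have : nsq (a i j) <= Z ^+ 2 by apply: sq_le_en; [lra | exact: ZZ_ge].
    move=> h; rewrite mulrA; apply: ler_wpM2r; first exact: nsq_ge0.
    by rewrite ler_wpM2r // sqr_ge0.
  have : e * expR (- del) <= e * (1 - del + 2 * del ^+ 2) by rewrite ler_wpM2l.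
  have : e * (2 * del ^+ 2) <= e * C by rewrite ler_wpM2l // /C ler_wpM2l.
  rewrite /C; nra.
have hsum : Lo' (w + eta *: G) <= \sum_i \sum_j
    (expR (- dot (a i j) w) - expR (- dot (a i j) w) * dot (a i j) (eta *: G) +
     expR (- dot (a i j) w) * C).
  by apply: ler_sum => i _; apply: ler_sum => j _; apply: hterm.
have eR : \sum_i \sum_j
    (expR (- dot (a i j) w) - expR (- dot (a i j) w) * dot (a i j) (eta *: G) +
     expR (- dot (a i j) w) * C) = Lw - dot G (eta *: G) + Lw * C.
  rewrite /G dot_gr /Lw /Lo mulr_suml -sumrB -big_split /=.
  apply: eq_bigr => i _; rewrite mulr_suml -sumrB -big_split /=.
  by apply: eq_bigr => j _.
rewrite eR dotZr -/(nsq G) in hsum.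
apply: (le_trans hsum); rewrite /C; lra.
Qed.

Definition wt t := centralGD x y eta t.

Lemma grad_eq w : central_grad x y w = - gr' w.
Proof.
rewrite /central_grad /gr -sumrN; apply: eq_bigr => i _; rewrite -sumrN.
apply: eq_bigr => j _; rewrite mE /av scalerA; by rewrite scaleNr.
Qed.

Lemma wtS t : wt t.+1 = wt t + eta *: gr' (wt t).
Proof. by rewrite /wt /centralGD iterS grad_eq scalerN opprK. Qed.

Definition Lt t := Lo' (wt t).
Definition gt t := gr' (wt t).

Lemma Lt_desc t : Lt t <= L0' /\
  Lt t.+1 <= Lt t - eta * (1 - 2 * eta * Z ^+ 2 * Lt t) * nsq (gt t).
Proof.
elim: t => [|t [IH1 IH2]].
  have h0 : Lt 0 = L0' by rewrite /Lt /wt /centralGD /= Lo0.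
  split; first by rewrite h0.
  by rewrite /Lt wtS; apply: descent; rewrite -/(Lt 0) h0.
have hf : 0 <= 1 - 2 * eta * Z ^+ 2 * Lt t.
  have : eta * Z ^+ 2 * Lt t <= eta * Z ^+ 2 * L0'.
    by rewrite ler_wpM2l // mulr_ge0 ?sqr_ge0 // ltW.
  have : eta * Z ^+ 2 * L0' <= 1 / 4.
    move: Heta0; have -> : eta * (4 * Z ^+ 2 * L0') = 4 * (eta * Z ^+ 2 * L0') by ring.
    lra.
  lra.
have hn : 0 <= eta * (1 - 2 * eta * Z ^+ 2 * Lt t) * nsq (gt t).
  by rewrite mulr_ge0 ?nsq_ge0 // mulr_ge0 // ltW.
have h1 : Lt t.+1 <= L0' by lra.
split => //.
by rewrite /Lt wtS; apply: descent.
Qed.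


Local Notation ws := (wst x y).
Definition gam := (en ws)^-1.
Definition epsl t := 2 * eta * Z ^+ 2 * Lt t.
Definition xt t := eta * (1 - epsl t) * nsq (gt t) / Lt t.
Definition Xs t := \sum_(s < t) xt s.
Definition Ss t := \sum_(s < t) eta * en (gt s).

Lemma Lt_pos t : 0 < Lt t. Proof. exact: Lo_gt0. Qed.
Lemma gam_pos : 0 < gam. Proof. by rewrite /gam invr_gt0 (wst_gt0 HM HN HCb). Qed.

Lemma epsl_le t : epsl t <= 1 / 2.
Proof.
have [h _] := Lt_desc t.
have hZ := Zpos.
have : eta * Z ^+ 2 * Lt t <= eta * Z ^+ 2 * L0'.
  by rewrite ler_wpM2l // mulr_ge0 ?sqr_ge0 // ltW.
have : eta * Z ^+ 2 * L0' <= 1 / 4.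
  move: Heta0; have -> : eta * (4 * Z ^+ 2 * L0') = 4 * (eta * Z ^+ 2 * L0') by ring.
  lra.
rewrite /epsl; have -> : 2 * eta * Z ^+ 2 * Lt t = 2 * (eta * Z ^+ 2 * Lt t) by ring.
lra.
Qed.

Lemma Lt_step t : Lt t.+1 <= Lt t * (1 - xt t).
Proof.
have [_ h] := Lt_desc t.
have hL := Lt_pos t.
rewrite /xt mulrBr mulr1 -/(epsl t).
have -> : Lt t * (eta * (1 - epsl t) * nsq (gt t) / Lt t) = eta * (1 - epsl t) * nsq (gt t).
  by field; rewrite gt_eqF.
by rewrite /epsl.
Qed.

Lemma Lt_decr t : Lt t.+1 <= Lt t.
Proof.
have h := Lt_step t; have he := epsl_le t.
have : 0 <= xt t.
  rewrite /xt divr_ge0 ?(ltW (Lt_pos t)) // mulr_ge0 ?nsq_ge0 // mulr_ge0 ?(ltW Heta) //; lra.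
have := Lt_pos t; nra.
Qed.

Lemma Lt_exp t : Lt t <= L0' * expR (- Xs t).
Proof.
elim: t => [|t IH].
  by rewrite /Xs big_ord0 oppr0 expR0 mulr1 /Lt /wt /centralGD /= Lo0.
apply: (le_trans (Lt_step t)).
have h1 : 1 - xt t <= expR (- xt t) by have := expR_ge1Dx (- xt t); lra.
have hL := Lt_pos t.
apply: (le_trans (ler_wpM2l (ltW hL) h1)).
rewrite /Xs big_ord_recr /= -/(Xs t) opprD expRD mulrA.
by rewrite ler_wpM2r // expR_ge0.
Qed.

Lemma margin_lower t i j : Xs t - L0' <= dot (a i j) (wt t).
Proof.
have h1 := term_le_Lo x y (wt t) i j.
have h2 := Lt_exp t; rewrite /Lt in h2.
have h3 : expR (Xs t - dot (a i j) (wt t)) <= L0'.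
  have e : L0' * expR (- Xs t) * expR (Xs t) = L0'.
    by rewrite -mulrA -expRD addNr expR0 mulr1.
  rewrite expRD mulrC -[X in _ <= X]e.
  by rewrite ler_wpM2r ?expR_ge0 //; apply: le_trans h2.
have := expR_ge1Dx (Xs t - dot (a i j) (wt t)); lra.
Qed.

Lemma en_wt t : en (wt t) <= Ss t.
Proof.
elim: t => [|t IH]; first by rewrite /wt /centralGD /= en0 /Ss big_ord0.
rewrite wtS /Ss big_ord_recr /= -/(Ss t).
apply: (le_trans (enD _ _)); rewrite enZ gtr0_norm //.
by apply: lerD.
Qed.

Lemma Ss_incr t : Ss t <= Ss t.+1.
Proof.
by rewrite /Ss big_ord_recr /= lerDl mulr_ge0 ?en_ge0 // ltW.
Qed.

Lemma Ss_mono t0 t : (t0 <= t)%N -> Ss t0 <= Ss t.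
Proof.
move=> h; rewrite -(subnK h); elim: (t - t0)%N => [|n IH]; first by rewrite add0n.
by rewrite addSn; apply: le_trans IH (Ss_incr _).
Qed.

Lemma gam_g t : gam * Lt t <= en (gt t).
Proof.
have h := gr_lower HCb (wt t).
have hw := wst_gt0 HM HN HCb.
rewrite /gam mulrC -ler_pdivlMr // ?invr_gt0 // invrK.
exact: h.
Qed.

Lemma xt_lower t : gam * (1 - epsl t) * (eta * en (gt t)) <= xt t.
Proof.
have hL := Lt_pos t; have he := epsl_le t; have hg := gam_g t.
have hgp := gam_pos.
rewrite /xt -en_sq expr2.
have -> : eta * (1 - epsl t) * (en (gt t) * en (gt t)) / Lt t =
  (eta * (1 - epsl t) * en (gt t)) * (en (gt t) / Lt t) by field; rewrite gt_eqF.
have h1 : gam <= en (gt t) / Lt t by rewrite ler_pdivlMr.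
have h2 : 0 <= eta * (1 - epsl t) * en (gt t).
  by rewrite mulr_ge0 ?en_ge0 // mulr_ge0 ?(ltW Heta) //; lra.
have : eta * (1 - epsl t) * en (gt t) * gam <= eta * (1 - epsl t) * en (gt t) * (en (gt t) / Lt t).
  by rewrite ler_wpM2l.
have -> : gam * (1 - epsl t) * (eta * en (gt t)) = eta * (1 - epsl t) * en (gt t) * gam by ring.
done.
Qed.


Lemma Lt_to0 e : 0 < e -> exists t0, forall t, (t0 <= t)%N -> Lt t < e.
Proof.
move=> he.
suff [t0 h0] : exists t0, Lt t0 < e.
  exists t0 => t ht; apply: le_lt_trans h0.
  exact: (nonincr_le (f := Lt) Lt_decr ht).
have [hyes|hno] := pselect (exists t0, Lt t0 < e); first exact: hyes.
exfalso.
have hge : forall t, e <= Lt t.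
  by move=> t; rewrite leNgt; apply/negP => h; apply: hno; exists t.
have hgp := gam_pos.
set c := eta / 2 * (gam * e) ^+ 2.
have hc : 0 < c by rewrite /c mulr_gt0 ?divr_gt0 // exprn_gt0 // mulr_gt0.
have hdec : forall t, Lt t.+1 <= Lt t - c.
  move=> t; have [_ h] := Lt_desc t.
  have he1 := epsl_le t; rewrite /epsl in he1.
  have hg := gam_g t.
  have h1 : (gam * e) ^+ 2 <= nsq (gt t).
    have hge0 : 0 <= gam * e by rewrite mulr_ge0 // ltW.
    have : gam * e <= en (gt t) by apply: (le_trans _ hg); rewrite ler_wpM2l // ltW.
    move=> h3; rewrite -en_sq; rewrite !expr2; have := en_ge0 (gt t); nra.
  have h2 : eta / 2 <= eta * (1 - 2 * eta * Z ^+ 2 * Lt t).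
    have : eta * (1 / 2) <= eta * (1 - 2 * eta * Z ^+ 2 * Lt t) by rewrite ler_wpM2l ?(ltW Heta) //; lra.
    lra.
  have h3 : eta / 2 * (gam * e) ^+ 2 <= eta * (1 - 2 * eta * Z ^+ 2 * Lt t) * nsq (gt t).
    apply: ler_pM; [by rewrite divr_ge0 // ltW | by rewrite sqr_ge0 | exact: h2 | exact: h1].
  rewrite /c; lra.
have hlin : forall n, Lt n <= L0' - n%:R * c.
  move=> n; elim: n => [|n IH]; first by rewrite mul0r subr0 /Lt /wt /centralGD /= Lo0.
  apply: (le_trans (hdec n)); rewrite -natr1 mulrDl mul1r; lra.
set T := (Num.Def.truncn (L0' / c)).+1.
have hT : L0' / c < T%:R by apply: truncnS_gt.
have hT2 : L0' < T%:R * c by rewrite -ltr_pdivrMr.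
have := hlin T; have := Lt_pos T; lra.
Qed.

Lemma Ss_unbounded B : exists t, B <= Ss t.
Proof.
set i0 := Ordinal HM; set j0 := Ordinal HN.
have hZ := Zpos.
have hb : forall t, expR (- (Z * Ss t)) <= Lt t.
  move=> t; apply: le_trans (term_le_Lo x y (wt t) i0 j0).
  rewrite ler_expR lerN2.
  apply: (le_trans (CSn _ _)); apply: ler_pM; rewrite ?en_ge0 //.
    exact: ZZ_ge.
  exact: en_wt.
have [t0 h0] := Lt_to0 (expR_gt0 (- (Z * B))).
exists t0; have := h0 t0 (leqnn _); have := hb t0 => h1 h2.
have : expR (- (Z * Ss t0)) < expR (- (Z * B)) by apply: le_lt_trans h1 h2.
rewrite ltr_expR ltrN2 => h3.
by apply: ltW; rewrite -(ltr_pM2l hZ).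
Qed.

Lemma Xs_ge0 t : 0 <= Xs t.
Proof.
apply: sumr_ge0 => s _; apply: le_trans (xt_lower s).
have := epsl_le s; have := gam_pos => h1 h2.
rewrite mulr_ge0 ?mulr_ge0 ?en_ge0 // ?(ltW Heta) // ?(ltW h1) //; lra.
Qed.

Lemma central_dir : dirn (wt t) @[t --> \oo] --> dirn ws.
Proof.
apply: cvg_en => ep hep.
set e := Num.min (1 / 4) (Num.min (ep ^+ 2 / 16) (ep / 8)).
have he : 0 < e by rewrite /e !lt_min divr_gt0 //= divr_gt0 ?exprn_gt0 //= divr_gt0.
have he1 : e <= 1 / 4 by rewrite /e ge_min lexx.
have he2 : e <= ep ^+ 2 / 16 by rewrite /e !ge_min lexx orbT.
have he3 : e <= ep / 8 by rewrite /e !ge_min lexx !orbT.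
have hZ := Zpos; have hgp := gam_pos.
have hZ2 : 0 < 2 * eta * Z ^+ 2 by rewrite mulr_gt0 ?exprn_gt0 // mulr_gt0.
have [t0 h0] := Lt_to0 (divr_gt0 he hZ2).
have heps : forall t, (t0 <= t)%N -> epsl t <= e.
  move=> t ht; have := h0 t ht; rewrite ltr_pdivlMr // /epsl => h; apply: ltW.
  by have -> : 2 * eta * Z ^+ 2 * Lt t = Lt t * (2 * eta * Z ^+ 2) by ring.
have Xlow : forall n, gam * (1 - e) * (Ss (t0 + n) - Ss t0) <= Xs (t0 + n).
  elim => [|n IH]; first by rewrite addn0 subrr mulr0 Xs_ge0.
  rewrite addnS /Xs /Ss !big_ord_recr /= -/(Xs (t0 + n)) -/(Ss (t0 + n)).
  have h1 := xt_lower (t0 + n).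
  have h2 := heps (t0 + n)%N (leq_addr _ _).
  have h3 : 0 <= gam * (eta * en (gt (t0 + n))) by rewrite mulr_ge0 ?mulr_ge0 ?en_ge0 // ltW.
  have : gam * (1 - e) * (eta * en (gt (t0 + n))) <= gam * (1 - epsl (t0 + n)) * (eta * en (gt (t0 + n))).
    have -> : gam * (1 - e) * (eta * en (gt (t0 + n))) = (1 - e) * (gam * (eta * en (gt (t0 + n)))) by ring.
    have -> : gam * (1 - epsl (t0 + n)) * (eta * en (gt (t0 + n))) = (1 - epsl (t0 + n)) * (gam * (eta * en (gt (t0 + n)))) by ring.
    by rewrite ler_wpM2r //; lra.
  move=> h4.
  have -> : gam * (1 - e) * (Ss (t0 + n) + eta * en (gt (t0 + n)) - Ss t0) =
    gam * (1 - e) * (Ss (t0 + n) - Ss t0) + gam * (1 - e) * (eta * en (gt (t0 + n))) by ring.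
  lra.
have hL0 : 0 < L0' by exact: (L0_gt0 x y HM HN).
have hS0 : 0 <= Ss t0 by rewrite sumr_ge0 // => s _; rewrite mulr_ge0 ?en_ge0 // ltW.
set B := Ss t0 / e + L0' / (gam * e) + 1.
have [t1 h1] := Ss_unbounded B.
exists (maxn t0 t1) => // t /= ht.
have ht0 : (t0 <= t)%N by apply: leq_trans ht; apply: leq_maxl.
have ht1 : (t1 <= t)%N by apply: leq_trans ht; apply: leq_maxr.
have hSt : B <= Ss t by apply: le_trans h1 (Ss_mono ht1).
have hX : gam * (1 - e) * (Ss t - Ss t0) <= Xs t by rewrite -(subnKC ht0); apply: Xlow.
set rho := gam * (1 - 2 * e).
have hrho : 0 < rho by rewrite /rho mulr_gt0 //; lra.
have hB1 : 1 <= B.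
  have : 0 <= Ss t0 / e by rewrite divr_ge0 // ltW.
  have : 0 <= L0' / (gam * e) by rewrite divr_ge0 ?mulr_ge0 // ltW.
  rewrite /B; lra.
have hgB : gam * e * B = gam * Ss t0 + L0' + gam * e.
  by rewrite /B; field; rewrite gt_eqF // gt_eqF.
have hmarg : forall i j, rho * Ss t <= dot (a i j) (wt t).
  move=> i j; apply: le_trans (margin_lower t i j).
  have h2 : gam * e * B <= gam * e * Ss t by rewrite ler_wpM2l // mulr_ge0 // ltW.
  have h3 : 0 <= gam * e * Ss t0 by rewrite mulr_ge0 // mulr_ge0 // ltW.
  have h4 : 0 <= gam * e by rewrite mulr_ge0 // ltW.
  have -> : rho * Ss t = gam * (1 - e) * (Ss t - Ss t0) - gam * e * Ss t + gam * (1 - e) * Ss t0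
    by rewrite /rho; ring.
  lra.
have hSp : 0 < Ss t by lra.
have hwt := en_wt t.
have hwpos : 0 < en (wt t).
  set i0 := Ordinal HM; set j0 := Ordinal HN.
  have k1 := hmarg i0 j0.
  have k2 := CSn (a i0 j0) (wt t).
  have k4 : 0 < rho * Ss t by rewrite mulr_gt0.
  rewrite lt_def en_ge0 andbT; apply/eqP => h0'.
  rewrite h0' mulr0 in k2; lra.
have hmarg2 : forall i j, rho * en (wt t) <= dot (a i j) (wt t).
  by move=> i j; apply: le_trans (hmarg i j); rewrite ler_wpM2l // ltW.
have hrw : 0 < rho * en (wt t) by rewrite mulr_gt0.
set c := (rho * en (wt t))^-1 *: wt t.
have hc : Cbar x y c.
  rewrite Cbar_H => -[i j] /=; rewrite dotZr mulrC ler_pdivlMr // mul1r.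
  exact: hmarg2.
have hob : nsq ws + nsq (c - ws) <= nsq c.
  have := proj_obtuse 0 HCb (@Cb_cl _ _ _ _ x y) (@Cb_cv _ _ _ _ x y) hc.
  by rewrite !subr0.
have hws := wst_gt0 HM HN HCb.
have hwsq : nsq ws = (gam^-1) ^+ 2 by rewrite /gam invrK en_sq.
have hr0 : rho != 0 by rewrite gt_eqF.
have hw0 : en (wt t) != 0 by rewrite gt_eqF.
have hcsq : nsq c = (rho^-1) ^+ 2.
  rewrite /c nsqZ -en_sq; field.
  by rewrite hr0 hw0.
have hdir : dirn (wt t) = rho *: c.
  rewrite /c scalerA dirnE; congr (_ *: _); field.
  by rewrite hr0 hw0.
have hdirs : dirn ws = gam *: ws by [].
rewrite hdir hdirs.
have -> : rho *: c - gam *: ws = rho *: (c - ws) + (rho - gam) *: ws.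
  by rewrite scalerBr scalerBl addrA subrK.
apply: le_lt_trans (enD _ _) _.
have k1 : en (rho *: (c - ws)) <= ep / 2.
  apply: en_le_sq; first by rewrite divr_ge0 // ltW.
  rewrite nsqZ.
  have k2 : nsq (c - ws) <= (rho^-1) ^+ 2 - (gam^-1) ^+ 2 by rewrite -hcsq -hwsq; lra.
  have k3 : rho ^+ 2 * ((rho^-1) ^+ 2 - (gam^-1) ^+ 2) = 1 - (1 - 2 * e) ^+ 2.
    by rewrite /rho; field; rewrite !gt_eqF //; lra.
  apply: (le_trans (ler_wpM2l (sqr_ge0 rho) k2)); rewrite k3.
  have : ep ^+ 2 <= ep ^+ 2 by [].
  rewrite !expr2 in he2 *; nra.
have k4 : en ((rho - gam) *: ws) = 2 * e.
  rewrite enZ ler0_norm; last by rewrite /rho; nra.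
  rewrite /rho /gam; field; rewrite gt_eqF //.
rewrite k4; lra.
Qed.

End GD.

Unset Implicit Arguments.
Theorem theorem2 (R : realType) (M N d : nat) (HM : (0 < M)%N) (HN : (0 < N)%N)
  (Hd : (0 < d)%N) (y : 'I_M -> 'I_N -> R)
  (Hy : forall i j, y i j = 1 \/ y i j = -1) :
  exists E : set ('I_M * 'I_N * 'I_d -> R),
    lebesgue_null E /\
    forall z : 'I_M * 'I_N * 'I_d -> R, ~ E z ->
      let x := data_of z in
      (forall i, exists w, Cset x y i w) ->
      (exists w, Cbar x y w) ->
      (* Local-GD: lim_{K -> oo} lim_{lam -> 0+} w_0^K(lam)/||w_0^K(lam)|| = wbar/||wbar|| *)
      (exists wbar, Cbar x y wbar /\
        exists u : nat -> 'rV[R]_d,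
          (\forall K \near \oo,
             dirn (localGD x y lam K) @[lam --> 0^'+] --> u K) /\
          u @ \oo --> dirn wbar) /\
      (* centralized GD: converges in direction to the min-norm point of Cbar *)
      (exists wstar, Cbar x y wstar /\
         (forall w, Cbar x y w -> enorm wstar <= enorm w) /\
         exists eta0 : R, 0 < eta0 /\
           forall eta : R, 0 < eta -> eta < eta0 ->
             dirn (centralGD x y eta t) @[t --> \oo] --> dirn wstar).
Proof.
exists set0; split.
  move=> eps heps; exists (fun _ _ => 0), (fun _ _ => 0); split; first by move=> k i.
  split; first by move=> z [].
  move=> n; rewrite big1 ?ltW // => k _.
  by rewrite (bigD1 (Ordinal HM, Ordinal HN, Ordinal Hd)) //= subrr mul0r.
move=> z _ x hCi hCb; split.
  exact: (local_part HM HN hCb).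
exists (wst x y); split; first exact: (proj1 (wst_spec hCb)).
split; first by move=> w hw; rewrite !enE; exact: (proj2 (wst_spec hCb)).
set K := 4 * ZZ x y ^+ 2 * L0 R M N.
have hK : 0 < K.
  rewrite /K mulr_gt0 ?(L0_gt0 x y HM HN) // mulr_gt0 // exprn_gt0 //.
  exact: ZZ_gt0.
exists K^-1; split; first by rewrite invr_gt0.
move=> eta he1 he2.
apply: (central_dir HM HN hCb he1).
by rewrite -/K -ler_pdivlMr // div1r ltW.
Qed.
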